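(* Let $X,Y,Z$ be topological spaces and $f:X\times Y\to Z$ a mapping. Let $\tau_f$ be the topology on $X\times Y$ generated by $f$ and the two projections $X\times Y\to X$, $X\times Y\to Y$ (the coarsest topology making these three maps continuous). Then the set $Q$ of all $(x,y)\in X\times Y$ at which $f$ is lower $X$-quasicontinuous is closed in $(X\times Y,\tau_f)$.
   Context: $f$ is lower $X$-quasicontinuous at $(a,b)$ if for each neighborhood $U$ of $a$ in $X$, each neighborhood $V$ of $b$ in $Y$, and each neighborhood $W$ of $f(a,b)$ in $Z$, there is an open set $O\subset X$ with $\emptyset\neq O\subset U$ and $f(\{x\}\times V)\cap W\neq\emptyset$ for every $x\in O$. *)

(* Defs.v *)
From Stdlib Require Import Classical.

Definition is_topology {T : Type} (op : (T -> Prop) -> Prop) : Prop :=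
  op (fun _ => True) /\
  (forall A B, op A -> op B -> op (fun x => A x /\ B x)) /\
  (forall F : (T -> Prop) -> Prop,
      (forall A, F A -> op A) -> op (fun x => exists A, F A /\ A x)).

Definition nbhd {T : Type} (op : (T -> Prop) -> Prop) (a : T) (U : T -> Prop) : Prop :=
  exists G, op G /\ G a /\ (forall x, G x -> U x).

Definition lower_X_quasicontinuous {X Y Z : Type}
  (opX : (X -> Prop) -> Prop) (opY : (Y -> Prop) -> Prop) (opZ : (Z -> Prop) -> Prop)
  (f : X * Y -> Z) (a : X) (b : Y) : Prop :=
  forall (U : X -> Prop) (V : Y -> Prop) (W : Z -> Prop),
    nbhd opX a U -> nbhd opY b V -> nbhd opZ (f (a, b)) W ->
    exists O : X -> Prop,
      opX O /\ (exists x, O x) /\ (forall x, O x -> U x) /\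
      (forall x, O x -> exists y, V y /\ W (f (x, y))).

Definition tau_f_subbasis {X Y Z : Type}
  (opX : (X -> Prop) -> Prop) (opY : (Y -> Prop) -> Prop) (opZ : (Z -> Prop) -> Prop)
  (f : X * Y -> Z) (S : X * Y -> Prop) : Prop :=
  (exists A, opX A /\ forall p, S p <-> A (fst p)) \/
  (exists B, opY B /\ forall p, S p <-> B (snd p)) \/
  (exists C, opZ C /\ forall p, S p <-> C (f p)).

Definition tau_f_open {X Y Z : Type}
  (opX : (X -> Prop) -> Prop) (opY : (Y -> Prop) -> Prop) (opZ : (Z -> Prop) -> Prop)
  (f : X * Y -> Z) (G : X * Y -> Prop) : Prop :=
  forall op : (X * Y -> Prop) -> Prop,
    is_topology op -> (forall S, tau_f_subbasis opX opY opZ f S -> op S) -> op G.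

Definition tau_f_closed {X Y Z : Type}
  (opX : (X -> Prop) -> Prop) (opY : (Y -> Prop) -> Prop) (opZ : (Z -> Prop) -> Prop)
  (f : X * Y -> Z) (C : X * Y -> Prop) : Prop :=
  tau_f_open opX opY opZ f (fun p => ~ C p).

(* Main.v *)
Require Import Defs.
From Stdlib Require Import Classical FunctionalExtensionality PropExtensionality.

Lemma op_ext {T : Type} (op : (T -> Prop) -> Prop) (A B : T -> Prop) :
  op A -> (forall p, A p <-> B p) -> op B.
Proof.
  intros H E. replace B with A; auto.
  apply functional_extensionality; intro p; apply propositional_extensionality; auto.
Qed.

Theorem mainTheorem5 (X Y Z : Type)
  (opX : (X -> Prop) -> Prop) (opY : (Y -> Prop) -> Prop) (opZ : (Z -> Prop) -> Prop)
  (hX : is_topology opX) (hY : is_topology opY) (hZ : is_topology opZ)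
  (f : X * Y -> Z) :
  tau_f_closed opX opY opZ f
    (fun p => lower_X_quasicontinuous opX opY opZ f (fst p) (snd p)).
Proof.
  intros op Hop Hsub.
  destruct Hop as [_ [Hint Hun]].
  set (Q := fun p : X * Y => lower_X_quasicontinuous opX opY opZ f (fst p) (snd p)).
  set (F := fun A : X * Y -> Prop =>
     (exists GU GV GW, opX GU /\ opY GV /\ opZ GW /\
        forall p, A p <-> (GU (fst p) /\ GV (snd p) /\ GW (f p)))
     /\ forall p, A p -> ~ Q p).
  apply op_ext with (A := fun p => exists A, F A /\ A p).
  - apply Hun. intros A [[GU [GV [GW [oU [oV [oW E]]]]]] _].
    apply op_ext with (A := fun p => GU (fst p) /\ (GV (snd p) /\ GW (f p))); [|intro; symmetry; auto].
    apply Hint; [|apply Hint].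
    + apply Hsub. left. exists GU; split; auto. tauto.
    + apply Hsub. right; left. exists GV; split; auto. tauto.
    + apply Hsub. right; right. exists GW; split; auto. tauto.
  - intros p; split.
    + intros [A [[_ HA] Ap]]. exact (HA p Ap).
    + intros nQ.
      unfold Q, lower_X_quasicontinuous in nQ.
      apply not_all_ex_not in nQ as [U nQ].
      apply not_all_ex_not in nQ as [V nQ].
      apply not_all_ex_not in nQ as [W nQ].
      apply imply_to_and in nQ as [nU nQ].
      apply imply_to_and in nQ as [nV nQ].
      apply imply_to_and in nQ as [nW nO].
      destruct nU as [GU [oU [aU sU]]].
      destruct nV as [GV [oV [aV sV]]].
      destruct nW as [GW [oW [aW sW]]].
      exists (fun q => GU (fst q) /\ GV (snd q) /\ GW (f q)).
      split; [split|].
      * exists GU, GV, GW; repeat split; tauto.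
      * intros q [qU [qV qW]] Qq.
        apply nO.
        destruct (Qq U V W) as [O HO].
        -- exists GU; auto.
        -- exists GV; auto.
        -- exists GW; repeat split; auto. destruct q; exact qW.
        -- exists O; exact HO.
      * destruct p; simpl in *; auto.
Qed.
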